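(* Let $A\in M_n$, $B\in M_m$, $c\in\mathbb{R}^n$, $d\in\mathbb{R}^m$. If $W_c(A)=W_d(B)$, then there exists a $c$-value of $A$ which is also a $d$-value of $B$.
   Context: $M_n$ denotes the space of $n\times n$ complex matrices. The $c$-numerical range of $A\in M_n$ is $W_c(A)=\{\sum_{j=1}^n c_jx_j^*Ax_j:\ x_1,\dots,x_n\in\mathbb{C}^n\text{ orthonormal}\}$, and similarly $W_d(B)$. Let $\lambda_1(A),\dots,\lambda_n(A)$ be the eigenvalues of $A$ counted with algebraic multiplicity and let $i_1<\dots<i_r$ be the indices with $c_{i_s}\neq0$. A $c$-value of $A$ is a number $\sum_{s=1}^r c_{i_s}\lambda_{j_s}(A)$ with $j_1,\dots,j_r\in\{1,\dots,n\}$ pairwise distinct; $d$-values of $B$ are defined analogously. *)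

(* Defs.v *)
From HB Require Import structures.
From mathcomp Require Import all_boot all_order all_algebra.
Set Implicit Arguments. Unset Strict Implicit. Unset Printing Implicit Defensive.
Import Order.TTheory GRing.Theory Num.Theory.
Local Open Scope ring_scope.

Definition adjmx (C : numClosedFieldType) (p q : nat) (M : 'M[C]_(p, q)) : 'M[C]_(q, p) :=
  (map_mx Num.conj M)^T.

Definition orthonormal_family (C : numClosedFieldType) (n : nat) (x : 'I_n -> 'cV[C]_n) :=
  forall i j : 'I_n, (adjmx (x i) *m x j) 0 0 = (i == j)%:R.

Definition c_numrange (C : numClosedFieldType) (n : nat) (c : 'I_n -> C) (A : 'M[C]_n) (z : C) :=
  exists x : 'I_n -> 'cV[C]_n, orthonormal_family x /\
    z = \sum_(j < n) c j * (adjmx (x j) *m A *m x j) 0 0.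

(* lam lists the eigenvalues of A counted with algebraic multiplicity *)
Definition eigen_listing (C : numClosedFieldType) (n : nat) (A : 'M[C]_n) (lam : 'I_n -> C) :=
  char_poly A = \prod_(i < n) ('X - (lam i)%:P).

Definition c_value (C : numClosedFieldType) (n : nat) (c : 'I_n -> C) (A : 'M[C]_n) (z : C) :=
  exists lam : 'I_n -> C, eigen_listing A lam /\
    exists j : 'I_n -> 'I_n,
      {in [pred i | c i != 0] &, injective j} /\
      z = \sum_(i < n | c i != 0) c i * lam (j i).

(* Main.v *)
Require Import Defs.
From HB Require Import structures.
From mathcomp Require Import all_boot all_order all_algebra.
From mathcomp Require Import fingroup perm.
From mathcomp Require Import spectral.
From mathcomp Require Import mpoly.
From mathcomp Require Import ring.
Import Order.TTheory GRing.Theory Num.Theory.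
Set Implicit Arguments. Unset Strict Implicit. Unset Printing Implicit Defensive.
Local Open Scope ring_scope.

Section Core.
Variable R : numDomainType.

Lemma abel_core (n : nat) (a b : nat -> R) (W : nat -> nat -> R) :
  (forall i j, (i <= j < n)%N -> a j <= a i) ->
  (forall i j, (i <= j < n)%N -> b j <= b i) ->
  (forall i j, (i < n)%N -> (j < n)%N -> 0 <= W i j) ->
  (forall i, (i < n)%N -> \sum_(0 <= j < n) W i j = 1) ->
  (forall j, (j < n)%N -> \sum_(0 <= i < n) W i j = 1) ->
  \sum_(0 <= i < n) a i * \sum_(0 <= j < n) W i j * b j <= \sum_(0 <= i < n) a i * b i.
Proof.
move=> ha hb hW hr hc.
pose u i := \sum_(0 <= j < n) W i j * b j.
pose d i := u i - b i.
pose D k := \sum_(0 <= i < k) d i.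
have claim1 k : (k <= n)%N -> D k <= 0.
  case: k => [|k] kn; first by rewrite /D big_geq.
  pose q j := \sum_(0 <= i < k.+1) W i j.
  have E1 : \sum_(0 <= i < k.+1) u i = \sum_(0 <= j < n) q j * b j.
    rewrite /u exchange_big /=; apply: eq_bigr => j _; rewrite /q mulr_suml.
    by [].
  have E2 : \sum_(0 <= i < k.+1) b i = \sum_(0 <= j < n) (j < k.+1)%N%:R * b j.
    rewrite [RHS](big_cat_nat (n := k.+1)) //= [X in _ = _ + X]big1_seq ?addr0; last first.
      move=> j /andP [_]; rewrite mem_index_iota => /andP [hj _].
      by rewrite ltnNge hj mul0r.
    by apply: eq_big_nat => j /andP [_ hj]; rewrite hj mul1r.
  have E3 : \sum_(0 <= j < n) q j = k.+1%:R.
    rewrite /q exchange_big /=; transitivity (\sum_(0 <= i < k.+1) (1 : R)).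
      by apply: eq_big_nat => i /andP [_ hi]; apply: hr; exact: leq_trans hi kn.
    by rewrite sumr_const_nat subn0.
  have qb j : (j < n)%N -> 0 <= q j <= 1.
    move=> jn; rewrite /q; apply/andP; split.
      rewrite big_nat_cond; apply: sumr_ge0 => i /andP [/andP [_ hi] _].
      by apply: hW => //; exact: leq_trans hi kn.
    rewrite -(hc j jn) [X in _ <= X](big_cat_nat (n := k.+1)) //= lerDl.
    rewrite big_nat_cond; apply: sumr_ge0 => i /andP [/andP [_ hi] _]; apply: hW => //.
  rewrite /D /d sumrB E1 E2 -sumrB.
  have -> : \sum_(0 <= i < n) (q i * b i - (i < k.+1)%N%:R * b i) =
      \sum_(0 <= i < n) (q i - (i < k.+1)%N%:R) * (b i - b k) +
      b k * (\sum_(0 <= i < n) q i - \sum_(0 <= i < n) (i < k.+1)%N%:R).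
    rewrite -sumrB mulr_sumr -big_split /=; apply: eq_bigr => i _.
    ring.
  have -> : \sum_(0 <= i < n) (i < k.+1)%N%:R = k.+1%:R :> R.
    rewrite (big_cat_nat (n := k.+1)) //= [X in _ + X]big1_seq ?addr0; last first.
      move=> j /andP [_]; rewrite mem_index_iota => /andP [hj _].
      by rewrite ltnNge hj.
    transitivity (\sum_(0 <= i < k.+1) (1 : R)); last by rewrite sumr_const_nat subn0.
    by apply: eq_big_nat => i /andP [_ ->].
  rewrite E3 subrr mulr0 addr0 big_nat_cond; apply: sumr_le0 => i /andP [/andP [_ hi] _].
  have /andP [q0 q1] := qb i hi.
  case: (ltnP i k.+1) => hik.
    rewrite mulr_le0_ge0 //; first by rewrite subr_le0.
    by rewrite subr_ge0; apply: hb; rewrite -ltnS hik kn.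
  by rewrite mulr_ge0_le0 ?subr0 // subr_le0; apply: hb; rewrite (ltnW hik) hi.
have Dn : D n = 0.
  rewrite /D /d sumrB /u exchange_big /=.
  rewrite -sumrB big1_seq // => j /andP [_]; rewrite mem_index_iota => /andP [_ hj].
  by rewrite -mulr_suml hc // mul1r subrr.
have S k : (k < n)%N -> \sum_(0 <= i < k) a i * d i <= a k * D k.
  elim: k => [|k IH] kn; first by rewrite /D !big_geq // mulr0.
  rewrite big_nat_recr //= /D big_nat_recr //= -/(D k).
  apply: le_trans (_ : a k * D k + a k * d k <= _).
    by rewrite lerD2r; apply: IH; exact: ltnW.
  rewrite -mulrDr -/(D k.+1).
  have : D k.+1 <= 0 by apply: claim1; exact: ltnW.
  rewrite /D big_nat_recr //= => hD.
  rewrite -subr_ge0 -mulrBl mulr_le0 //.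
    by rewrite subr_le0; apply: ha; rewrite leqnSn.
have main : \sum_(0 <= i < n) a i * d i <= 0.
  case En : n => [|n']; first by rewrite big_geq.
  rewrite big_nat_recr //=; apply: le_trans (_ : a n' * D n' + a n' * d n' <= _).
    by rewrite lerD2r; apply: S; rewrite En.
  by rewrite -mulrDr /D -big_nat_recr //= -/(D n'.+1) -En Dn mulr0.
move: main; rewrite /d /u; under eq_bigr do rewrite mulrBr.
by rewrite sumrB subr_le0.
Qed.

End Core.

Section Aux.
Variable C : numClosedFieldType.

Definition qf n (K : 'M[C]_n) (x : 'cV[C]_n) : C := (adjmx x *m K *m x) 0 0.

















Lemma diag_mxZ' n a (D : 'rV[C]_n) : diag_mx (a *: D) = a *: diag_mx D.
Proof. by apply/matrixP => i j; rewrite !mxE mulrnAr. Qed.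

Lemma adjmxD p q (M N : 'M[C]_(p, q)) : adjmx (M + N) = adjmx M + adjmx N.
Proof. by apply/matrixP => i j; rewrite !mxE rmorphD. Qed.
Lemma adjmxZ p q a (M : 'M[C]_(p, q)) : adjmx (a *: M) = a^* *: adjmx M.
Proof. by apply/matrixP => i j; rewrite !mxE rmorphM. Qed.
Lemma adjmxK p q (M : 'M[C]_(p, q)) : adjmx (adjmx M) = M.
Proof. by apply/matrixP => i j; rewrite !mxE conjCK. Qed.
Lemma adjmxM p q r (M : 'M[C]_(p, q)) (N : 'M[C]_(q, r)) :
  adjmx (M *m N) = adjmx N *m adjmx M.
Proof.
apply/matrixP => i j; rewrite !mxE rmorph_sum; apply: eq_bigr => k _.
by rewrite !mxE rmorphM mulrC.
Qed.
Lemma adjmx_herm n (A : 'M[C]_n) w : adjmx (w^* *: A + w *: adjmx A) = w^* *: A + w *: adjmx A.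
Proof. by rewrite adjmxD !adjmxZ adjmxK conjCK addrC. Qed.

Lemma qfD n (K1 K2 : 'M[C]_n) x : qf (K1 + K2) x = qf K1 x + qf K2 x.
Proof. by rewrite /qf mulmxDr mulmxDl mxE. Qed.
Lemma qfZ n a (K : 'M[C]_n) x : qf (a *: K) x = a * qf K x.
Proof. by rewrite /qf -scalemxAr -scalemxAl mxE. Qed.
Lemma qf_adj n (K : 'M[C]_n) x : qf (adjmx K) x = (qf K x)^*.
Proof.
rewrite /qf.
have -> : ((adjmx x *m K *m x) 0 0)^* = (adjmx (adjmx x *m K *m x)) 0 0 by rewrite !mxE.
by rewrite !adjmxM adjmxK mulmxA.
Qed.

Lemma qf_sum_real n (A : 'M[C]_n) (c : 'I_n -> C) (hc : forall i, c i \is Num.real)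
  (w : C) (x : 'I_n -> 'cV[C]_n) :
  \sum_i c i * qf (w^* *: A + w *: adjmx A) (x i) =
  w^* * (\sum_i c i * qf A (x i)) + w * (\sum_i c i * qf A (x i))^*.
Proof.
rewrite rmorph_sum !mulr_sumr -big_split; apply: eq_bigr => i _ /=.
rewrite qfD !qfZ qf_adj rmorphM /= (conj_Creal (hc i)); ring.
Qed.

Lemma unit_sqrt (t0 : C) : t0 * t0^* = 1 -> exists w : C, w * w^* = 1 /\ w * w = t0.
Proof.
move=> ht; exists (sqrtC t0); split; last by rewrite -expr2 sqrtCK.
have h2 : (sqrtC t0 * (sqrtC t0)^*) ^+ 2 = 1.
  by rewrite exprMn -rmorphXn sqrtCK.
have h0 : 0 <= sqrtC t0 * (sqrtC t0)^* by rewrite mul_conjC_ge0.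
move/eqP: h2; rewrite sqrf_eq1 => /orP [/eqP //|/eqP h].
by move: h0; rewrite h ler0N1.
Qed.
Lemma sort_perm n (f : 'I_n -> C) : (forall i, f i \is Num.real) ->
  exists al : 'S_n, forall i j : 'I_n, (i <= j)%N -> f (al j) <= f (al i).
Proof.
case: n f => [|n] f hf; first by exists 1%g => -[].
pose r := fun i j : 'I_n.+1 => f j <= f i.
have tot : total r by move=> i j; rewrite /r real_leVge.
have tr : transitive r by move=> x y z h1 h2; rewrite /r (le_trans h2 h1).
have rf : reflexive r by move=> x; rewrite /r lexx.
set s := sort r (enum 'I_n.+1).
have ss : sorted r s := sort_sorted tot _.
have ps : perm_eq s (enum 'I_n.+1) by rewrite perm_sort.
have sz : size s = n.+1 by rewrite (perm_size ps) size_enum_ord.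
have us : uniq s by rewrite (perm_uniq ps) enum_uniq.
pose g (k : 'I_n.+1) := nth ord0 s k.
have ginj : injective g.
  move=> i j /eqP; rewrite /g nth_uniq ?sz // => /eqP; exact: val_inj.
exists (perm ginj) => i j hij; rewrite !permE /g.
by apply: (sorted_leq_nth tr rf ord0 ss) => //; rewrite inE sz.
Qed.

Lemma rearr n (c rho : 'I_n -> C) : (forall i, c i \is Num.real) ->
  (forall i, rho i \is Num.real) ->
  exists s : 'S_n, forall W : 'I_n -> 'I_n -> C, (forall i j, 0 <= W i j) ->
    (forall i, \sum_j W i j = 1) -> (forall j, \sum_i W i j = 1) ->
    \sum_i c i * \sum_j W i j * rho j <= \sum_i c i * rho (s i).
Proof.
move=> hc hr; have [al hal] := sort_perm hc; have [be hbe] := sort_perm hr.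
exists (al^-1 * be)%g => W W0 Wr Wc.
case: n c rho hc hr al hal be hbe W W0 Wr Wc => [|n] c rho hc hr al hal be hbe W W0 Wr Wc.
  by rewrite !big_ord0.
have toN (G : 'I_n.+1 -> C) : \sum_(k < n.+1) G k = \sum_(0 <= k < n.+1) G (inord k).
  by rewrite big_mkord; apply: eq_bigr => k _; rewrite inord_val.
rewrite (reindex_inj (@perm_inj _ al)) [X in _ <= X](reindex_inj (@perm_inj _ al)) /=.
under eq_bigr do rewrite (reindex_inj (@perm_inj _ be)) /=.
under [X in _ <= X]eq_bigr do rewrite permM permK.
rewrite toN [X in _ <= X]toN; under eq_bigr do rewrite toN.
apply: (abel_core (a := fun k => c (al (inord k))) (b := fun k => rho (be (inord k)))
  (W := fun k l => W (al (inord k)) (be (inord l)))).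
- move=> i j /andP [hij hj]; apply: hal; rewrite !inordK //; exact: leq_ltn_trans hj.
- move=> i j /andP [hij hj]; apply: hbe; rewrite !inordK //; exact: leq_ltn_trans hj.
- by move=> i j _ _; apply: W0.
- by move=> i _; rewrite -(Wr (al (inord i))) (reindex_inj (@perm_inj _ be)) /= toN.
- by move=> j _; rewrite -(Wc (be (inord j))) (reindex_inj (@perm_inj _ al)) /= toN.
Qed.
Lemma spec_decomp n (K : 'M[C]_n) : adjmx K = K ->
  exists (P : 'M[C]_n) (D : 'rV[C]_n), [/\ P *m adjmx P = 1%:M, adjmx P *m P = 1%:M,
    K = adjmx P *m diag_mx D *m P & forall i, D 0 i \is Num.real].
Proof.
move=> hK.
have adjt p q (M : 'M[C]_(p, q)) : adjmx M = (M ^t*)%sesqui by rewrite /adjmx map_trmx.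
have Pu : spectralmx K *m adjmx (spectralmx K) = 1%:M.
  by rewrite adjt; apply/unitarymxP; exact: spectral_unitarymx.
have Kn : K \is normalmx by apply/normalmxP; rewrite -adjt hK.
have KE : K = adjmx (spectralmx K) *m diag_mx (spectral_diag K) *m spectralmx K.
  by rewrite adjt -invmx_unitary ?spectral_unitarymx //; exact/orthomx_spectralP.
exists (spectralmx K), (spectral_diag K); split => //; first exact: mulmx1C.
move=> i; set P := spectralmx K in Pu KE *; set D := spectral_diag K in KE *.
have dE : diag_mx D = P *m K *m adjmx P.
  by rewrite KE !mulmxA Pu mul1mx -mulmxA Pu mulmx1.
have : adjmx (diag_mx D) = diag_mx D by rewrite dE !adjmxM adjmxK hK mulmxA.
move/matrixP/(_ i i); rewrite !mxE eqxx !mulr1n => h; exact/CrealP.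
Qed.

Lemma qf_diag n (P : 'M[C]_n) (D : 'rV[C]_n) x :
  qf (adjmx P *m diag_mx D *m P) x = \sum_j D 0 j * ((P *m x) j 0 * ((P *m x) j 0)^*).
Proof.
rewrite /qf !mulmxA -adjmxM -mulmxA mul_mx_diag mxE; apply: eq_bigr => j _.
by rewrite !mxE; ring.
Qed.

Lemma KyFan n (K : 'M[C]_n) (hK : adjmx K = K) (c : 'I_n -> C)
  (hc : forall i, c i \is Num.real) :
  exists (P : 'M[C]_n) (D : 'rV[C]_n) (s : 'S_n) (x : 'I_n -> 'cV[C]_n),
  [/\ P \in unitmx, K = invmx P *m diag_mx D *m P, orthonormal_family x,
   \sum_i c i * qf K (x i) = \sum_i c i * D 0 (s i) &
   forall y, orthonormal_family y -> \sum_i c i * qf K (y i) <= \sum_i c i * D 0 (s i)].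
Proof.
have [P [D [Pu Pu' KE Dr]]] := spec_decomp hK.
have [s hs] := rearr hc Dr.
have PU : P \in unitmx by case: (mulmx1_unit Pu).
have iP : invmx P = adjmx P.
  by rewrite -[invmx P]mulmx1 -Pu mulmxA mulVmx // mul1mx.
have PPE j k : (P *m adjmx P) j k = (j == k)%:R by rewrite Pu mxE.
exists P, D, s, (fun i => adjmx (row (s i) P)); split => //.
- by rewrite iP.
- move=> i j; rewrite adjmxK !mxE.
  rewrite -(inj_eq (@perm_inj _ s)) -PPE mxE; apply: eq_bigr => k _; rewrite !mxE.
  by [].
- apply: eq_bigr => i _; congr (_ * _); rewrite KE qf_diag.
  have e1 j : (P *m adjmx (row (s i) P)) j 0 = (P *m adjmx P) j (s i).
    by rewrite !mxE; apply: eq_bigr => k _; rewrite !mxE.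
  rewrite (bigD1 (s i)) //= big1 ?addr0.
    by rewrite e1 PPE eqxx /= (rmorph1 Num.conj) !mulr1.
  by move=> j hj; rewrite e1 PPE (negbTE hj) mul0r mulr0.
move=> y hy.
pose Y : 'M[C]_n := \matrix_(i, j) y j i 0.
have YY : adjmx Y *m Y = 1%:M.
  apply/matrixP => i j; rewrite [RHS]mxE -(hy i j) !mxE; apply: eq_bigr => k _; rewrite !mxE.
  by [].
pose V := P *m Y.
have Vy i j : (P *m y i) j 0 = V j i.
  by rewrite !mxE; apply: eq_bigr => k _; rewrite !mxE.
have VV1 : adjmx V *m V = 1%:M.
  by rewrite adjmxM -mulmxA (mulmxA (adjmx P)) Pu' mul1mx YY.
have VV2 : V *m adjmx V = 1%:M.
  by rewrite adjmxM mulmxA -(mulmxA P) (mulmx1C YY) mulmx1 Pu.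
pose W i j := V j i * (V j i)^*.
have -> : \sum_i c i * qf K (y i) = \sum_i c i * \sum_j W i j * D 0 j.
  apply: eq_bigr => i _; rewrite KE qf_diag; congr (_ * _).
  by apply: eq_bigr => j _; rewrite Vy mulrC.
apply: hs.
- by move=> i j; rewrite /W mul_conjC_ge0.
- move=> i; have := congr1 (fun M : 'M[C]_n => M i i) VV1; rewrite /= !mxE eqxx mulr1n => <-.
  by apply: eq_bigr => j _; rewrite /W !mxE mulrC.
- move=> j; have := congr1 (fun M : 'M[C]_n => M j j) VV2; rewrite /= !mxE eqxx mulr1n => <-.
  by apply: eq_bigr => i _; rewrite /W !mxE.
Qed.

Lemma char_poly_similar n (P M : 'M[C]_n) : P \in unitmx ->
  char_poly (invmx P *m M *m P) = char_poly M.
Proof.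
move=> Pu; rewrite /char_poly /char_poly_mx.
set Q := invmx P.
have QP : Q *m P = 1%:M by rewrite mulVmx.
have QP' : map_mx polyC Q *m map_mx polyC P = 1%:M by rewrite -map_mxM QP map_mx1.
have -> : 'X%:M - map_mx polyC (Q *m M *m P) =
    map_mx polyC Q *m ('X%:M - map_mx polyC M) *m map_mx polyC P.
  rewrite mulmxBr mulmxBl !map_mxM.
  by rewrite mul_mx_scalar -scalemxAl QP' scalemx1.
by rewrite !det_mulmx mulrAC -det_mulmx QP' det1 mul1r.
Qed.

Lemma listing_diag n (P : 'M[C]_n) (D : 'rV[C]_n) : P \in unitmx ->
  eigen_listing (invmx P *m diag_mx D *m P) (fun i => D 0 i).
Proof.
move=> Pu; rewrite /eigen_listing char_poly_similar //.
rewrite char_poly_trig ?diag_mx_is_trig //.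
by apply: eq_bigr => i _; rewrite mxE eqxx mulr1n.
Qed.

Lemma exists_listing n (A : 'M[C]_n) : exists lam, eigen_listing A lam.
Proof.
have [r hr] := closed_field_poly_normal (char_poly A).
move: hr; rewrite (monicP (char_poly_monic A)) scale1r => hr.
have sr : size r = n.
  by have := size_char_poly A; rewrite hr size_prod_XsubC => -[].
exists (fun i => nth 0 r i); rewrite /eigen_listing hr (big_nth 0) sr big_mkord.
by [].
Qed.
Lemma poly_eq0_inj (p : {poly C}) (f : nat -> C) : injective f ->
  (forall k, p.[f k] = 0) -> p = 0.
Proof.
move=> finj hp; apply/eqP; apply: contraT => pn0.
have := max_poly_roots (rs := map f (iota 0 (size p))) pn0.
rewrite size_map size_iota ltnn; apply.
  by apply/allP => _ /mapP [k _ ->]; rewrite /root hp.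
by rewrite map_inj_uniq // iota_uniq.
Qed.

Lemma natC_inj : injective (fun k : nat => (k%:R : C)).
Proof. by move=> k l /eqP; rewrite eqr_nat => /eqP. Qed.

Lemma natCi_neq0 (k : nat) (s : C) : s = 1 \/ s = -1 -> k%:R + s * 'i != 0 :> C.
Proof.
move=> hs; apply/eqP => h; have := nonRealCi C.
case: hs h => -> h.
  have -> : 'i = (k%:R + 1 * 'i) - k%:R :> C by ring.
  by rewrite h sub0r realN realn.
have -> : 'i = k%:R - (k%:R + -1 * 'i) :> C by ring.
by rewrite h subr0 realn.
Qed.

Definition wk (k : nat) : C := (k%:R + 'i) / (k%:R - 'i).

Lemma wk_unit k : wk k * (wk k)^* = 1.
Proof.
have h1 : k%:R + 'i != 0 :> C by have := natCi_neq0 k (or_introl erefl); rewrite mul1r.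
have h2 : k%:R - 'i != 0 :> C.
  by have := natCi_neq0 k (or_intror erefl); rewrite mulN1r.
rewrite /wk rmorphM /= fmorphV /= rmorphB /= rmorphD /= conjCi (conj_Creal (realn _ k)).
rewrite opprK; field.
by rewrite h1 h2.
Qed.

Lemma wk_inj : injective wk.
Proof.
move=> k l h.
have h1 (j : nat) : j%:R + 'i != 0 :> C by have := natCi_neq0 j (or_introl erefl); rewrite mul1r.
have h2 (j : nat) : j%:R - 'i != 0 :> C.
  by have := natCi_neq0 j (or_intror erefl); rewrite mulN1r.
move/eqP: h; rewrite /wk eqr_div // => /eqP h.
have : 2%:R * 'i * (l%:R - k%:R) = 0 :> C.
  by rewrite -[RHS](subrr ((k%:R + 'i) * (l%:R - 'i))) {2}h; ring.
move/eqP; rewrite !mulf_eq0 pnatr_eq0 (negbTE (neq0Ci C)) /= subr_eq0 eqr_nat.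
by move=> /eqP ->.
Qed.

Lemma monic_spec (F : {poly {poly C}}) :
  (forall t0, map_poly (horner_eval t0) F \is monic) -> F \is monic.
Proof.
move=> hm; set lc := lead_coef F.
have h0 : lc * (lc - 1) = 0.
  apply: (poly_eq0_inj natC_inj) => k; rewrite hornerM hornerD hornerN hornerC.
  have [->|nz] := eqVneq lc.[k%:R] 0; first by rewrite mul0r.
  have := hm k%:R; rewrite monicE lead_coef_map_eq; last by rewrite /= horner_evalE.
  by rewrite /= horner_evalE => /eqP ->; rewrite subrr mulr0.
move/eqP: h0; rewrite mulf_eq0 => /orP [/eqP lc0|]; last first.
  by rewrite subr_eq0 monicE.
have := hm 0; move/eqP: lc0; rewrite lead_coef_eq0 => /eqP ->.
by rewrite map_poly0 monicE lead_coef0 eq_sym oner_eq0.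
Qed.

Lemma common_root_res (p q : {poly C}) u : p \is monic -> root p u -> root q u ->
  resultant p q = 0.
Proof.
move=> pm rp rq; apply/eqP; rewrite resultant_eq0.
have hd : ('X - u%:P) %| gcdp p q by rewrite dvdp_gcd !dvdp_XsubCl rp rq.
have gn0 : gcdp p q != 0 by rewrite gcdp_eq0 negb_and monic_neq0.
by have := dvdp_leq gn0 hd; rewrite size_XsubC.
Qed.

Lemma resultant_arg (F G : {poly {poly C}}) :
  (forall t0, map_poly (horner_eval t0) F \is monic) ->
  (forall t0, map_poly (horner_eval t0) G \is monic) ->
  (forall t0 : C, t0 * t0^* = 1 -> exists u,
      root (map_poly (horner_eval t0) F) u /\ root (map_poly (horner_eval t0) G) u) ->
  exists u, root (map_poly (horner_eval 0) F) u /\ root (map_poly (horner_eval 0) G) u.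
Proof.
move=> hF hG hc.
have Fm := monic_spec hF; have Gm := monic_spec hG.
have lcn (t0 : C) (H : {poly {poly C}}) : H \is monic -> horner_eval t0 (lead_coef H) != 0.
  by move/monicP => ->; rewrite rmorph1 oner_eq0.
have R0 : resultant F G = 0.
  apply: (poly_eq0_inj wk_inj) => k.
  rewrite -horner_evalE map_resultant ?lcn //.
  have [u [r1 r2]] := hc _ (wk_unit k).
  exact: common_root_res (hF _) r1 r2.
have : resultant (map_poly (horner_eval 0) F) (map_poly (horner_eval 0) G) == 0.
  by rewrite -map_resultant ?lcn // R0 rmorph0.
rewrite resultant_eq0 => hs.
have /closed_rootP [u hu] : size (gcdp (map_poly (horner_eval 0) F) (map_poly (horner_eval 0) G)) != 1.
  by rewrite neq_ltn hs orbT.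
exists u; split; apply: root_dvdp hu; [exact: dvdp_gcdl | exact: dvdp_gcdr].
Qed.
Lemma meval_rmorph (R S : comNzRingType) (f : {rmorphism R -> S}) k (p : {mpoly R[k]}) v :
  f p.@[v] = (map_mpoly f p).@[f \o v].
Proof.
elim/mpolyind: p => [|a m p _ _ IH]; first by rewrite !raddf0.
rewrite !raddfD /= map_mpolyZ map_mpolyX !mevalZ !mevalX IH rmorphM rmorph_prod /=.
by congr (_ * _ + _); apply: eq_bigr => i _; rewrite rmorphXn.
Qed.

Lemma msym_Xi (R : comNzRingType) k (s : 'S_k) i : msym s 'X_i = 'X_(s i) :> {mpoly R[k]}.
Proof. by rewrite /msym mmapX mmap1U. Qed.

Lemma msym_C (R : comNzRingType) k (s : 'S_k) (a : R) : msym s a%:MP = a%:MP.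
Proof. by rewrite /msym mmapC. Qed.
Definition pc n (c : 'I_n -> C) : {mpoly {poly C}[n]} :=
  \prod_(s : 'S_n) (('X : {poly C})%:MP - \sum_i ((c i)%:P)%:MP * 'X_(s i)).

Lemma pc_sym n (c : 'I_n -> C) : pc c \is symmetric.
Proof.
apply/issymP => t; rewrite /pc rmorph_prod /=.
rewrite [RHS](reindex_inj (h := fun s => (s * t)%g)) /=; last exact: mulIg.
apply: eq_bigr => s _; rewrite rmorphB /= msym_C rmorph_sum /=; congr (_ - _).
apply: eq_bigr => i _; rewrite rmorphM /= msym_C msym_Xi.
by rewrite permM.
Qed.

Definition qc n (c : 'I_n -> C) : {mpoly {poly C}[n]} := sval (sym_fundamental (pc_sym c)).

Lemma qcE n (c : 'I_n -> C) : qc c \mPo [tuple mesym n {poly C} i.+1 | i < n] = pc c.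
Proof. by rewrite /qc; case: sym_fundamental => t [] /=. Qed.

Definition ecoef (R : nzRingType) n (M : 'M[R]_n) (k : 'I_n) : R :=
  (-1) ^+ k.+1 * (char_poly M)`_(n - k.+1).

Lemma qc_listing n (c : 'I_n -> C) (M : 'M[C]_n) lam : eigen_listing M lam ->
  (qc c).@[fun k => (ecoef M k)%:P] = \prod_(s : 'S_n) ('X - (\sum_i c i * lam (s i))%:P).
Proof.
move=> hl; set v : 'I_n -> {poly C} := fun i => (lam i)%:P.
have he k : (ecoef M k)%:P = (tnth [tuple mesym n {poly C} i.+1 | i < n] k).@[v].
  rewrite tnth_mktuple.
  have kn : (k.+1 < n.+1)%N by rewrite ltnS.
  have := mroots_coeff [tuple v i | i < n] (Ordinal kn) => /=.
  have -> : \prod_(c0 <- [tuple v i | i < n]) ('X - c0%:P) =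
        map_poly polyC (char_poly M).
    rewrite hl rmorph_prod big_tuple /=; apply: eq_bigr => i _.
    by rewrite tnth_mktuple rmorphB /= map_polyX map_polyC.
  rewrite coef_map /= => h.
  rewrite (@meval_eq _ _ (tnth [tuple v i | i < n]) v) in h; last first.
    by move=> i; rewrite tnth_mktuple.
  have e2 : ((-1) ^+ k.+1)%:P * (-1) ^+ k.+1 = 1 :> {poly C}.
    by rewrite rmorphXn rmorphN rmorph1 -exprD -signr_odd oddD addbb /= expr0.
  by rewrite /ecoef rmorphM /= h mulrA e2 mul1r.
rewrite (meval_eq _ he) -comp_mpoly_meval qcE /pc rmorph_prod /=.
apply: eq_bigr => s _; rewrite rmorphB /= mevalC rmorph_sum /= rmorph_sum /=.
congr (_ - _); apply: eq_bigr => i _.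
by rewrite rmorphM /= mevalC mevalXU polyCM.
Qed.
Lemma ecoef_map (R S : comNzRingType) (f : {rmorphism R -> S}) n (M : 'M[R]_n) k :
  f (ecoef M k) = ecoef (map_mx f M) k.
Proof.
rewrite /ecoef rmorphM rmorphXn rmorphN rmorph1 -coef_map map_char_poly.
by [].
Qed.

Lemma PhiF n (c : 'I_n -> C) (A A' : 'M[C]_n) : exists F : {poly {poly C}},
  forall t0 lam, eigen_listing (A + t0 *: A') lam ->
  map_poly (horner_eval t0) F = \prod_(s : 'S_n) ('X - (\sum_i c i * lam (s i))%:P).
Proof.
pose MT : 'M[{poly C}]_n := map_mx polyC A + 'X *: map_mx polyC A'.
pose psi := map_poly (polyC : C -> {poly C}).
exists ((map_mpoly psi (qc c)).@[fun k => (ecoef MT k)%:P]) => t0 lam hl.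
rewrite meval_rmorph -(qc_listing c hl).
have -> : map_mpoly (map_poly (horner_eval t0)) (map_mpoly psi (qc c)) = qc c.
  apply/mpolyP => m; rewrite !mcoeff_map_mpoly /psi /=.
  by apply/polyP => j; rewrite coef_map /= coef_map /= horner_evalE hornerC.
apply: meval_eq => k /=; rewrite map_polyC /= ecoef_map; congr (ecoef _ _)%:P.
by apply/matrixP => i j; rewrite !mxE /= horner_evalE hornerD hornerC hornerM hornerX hornerC.
Qed.

End Aux.

Lemma root_prod_perm (C : numClosedFieldType) n (f : 'S_n -> C) s :
  root (\prod_(s0 : 'S_n) ('X - (f s0)%:P)) (f s).
Proof.
rewrite /root horner_prod (bigD1 s) //= !hornerE subrr mul0r.
by [].
Qed.

Lemma value_of_root (C : numClosedFieldType) n (c : 'I_n -> C) (A : 'M[C]_n) lam u :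
  eigen_listing A lam ->
  root (\prod_(s : 'S_n) ('X - (\sum_i c i * lam (s i))%:P)) u -> c_value c A u.
Proof.
move=> hl; rewrite /root horner_prod => /prodf_eq0 [s _].
rewrite !hornerE subr_eq0 => /eqP ->.
exists lam; split => //; exists s; split.
  by move=> i j _ _; apply: perm_inj.
rewrite [RHS]big_mkcond /=; apply: eq_bigr => i _.
by case: eqP => // ->; rewrite mul0r.
Qed.

Theorem mainTheorem13 (C : numClosedFieldType) (n m : nat)
    (A : 'M[C]_n) (B : 'M[C]_m) (c : 'I_n -> C) (d : 'I_m -> C)
    (hc : forall i, c i \is Num.real) (hd : forall i, d i \is Num.real)
    (hW : forall z : C, c_numrange c A z <-> c_numrange d B z) :
  exists z : C, c_value c A z /\ c_value d B z.
Proof.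
have [FA hFA] := PhiF c A (adjmx A).
have [FB hFB] := PhiF d B (adjmx B).
have monA t0 : map_poly (horner_eval t0) FA \is monic.
  have [lam hl] := exists_listing (A + t0 *: adjmx A).
  by rewrite (hFA t0 lam hl) monic_prod_XsubC.
have monB t0 : map_poly (horner_eval t0) FB \is monic.
  have [lam hl] := exists_listing (B + t0 *: adjmx B).
  by rewrite (hFB t0 lam hl) monic_prod_XsubC.
have [|u [ruA ruB]] := resultant_arg monA monB.
  move=> t0 /unit_sqrt [w [ww wt]].
  set KA := w^* *: A + w *: adjmx A.
  set KB := w^* *: B + w *: adjmx B.
  have [PA [DA [sA [xA [PAu KAE xAo xAv xAb]]]]] := KyFan (adjmx_herm A w) hc.
  have [PB [DB [sB [xB [PBu KBE xBo xBv xBb]]]]] := KyFan (adjmx_herm B w) hd.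
  have vle (n1 n2 : nat) (A1 : 'M[C]_n1) (A2 : 'M[C]_n2) c1 c2
     (hc1 : forall i, c1 i \is Num.real) (hc2 : forall i, c2 i \is Num.real)
     (hW1 : forall z, c_numrange c1 A1 z -> c_numrange c2 A2 z) x1 v2 :
     orthonormal_family x1 ->
     (forall y, orthonormal_family y ->
        \sum_i c2 i * qf (w^* *: A2 + w *: adjmx A2) (y i) <= v2) ->
     \sum_i c1 i * qf (w^* *: A1 + w *: adjmx A1) (x1 i) <= v2.
    move=> ox1 hb.
    have [y [oy yE]] := hW1 _ (ex_intro _ x1 (conj ox1 erefl)).
    rewrite qf_sum_real // yE -qf_sum_real //; exact: hb.
  have eqv : \sum_i c i * DA 0 (sA i) = \sum_i d i * DB 0 (sB i).
    apply/le_anti/andP; split.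
      rewrite -xAv; apply: (vle n m A B c d hc hd _ xA) => //. by move=> z /(hW z).
    rewrite -xBv; apply: (vle m n B A d c hd hc _ xB) => //. by move=> z /(hW z).
  have scK (k : nat) (M : 'M[C]_k) : w *: (w^* *: M + w *: adjmx M) = M + t0 *: adjmx M.
    by rewrite scalerDr !scalerA ww -wt scale1r.
  exists (w * \sum_i c i * DA 0 (sA i)); split.
    have hl : eigen_listing (A + t0 *: adjmx A) (fun i => (w *: DA) 0 i).
      rewrite -scK KAE scalemxAl scalemxAr -diag_mxZ'.
      exact: listing_diag.
    rewrite (hFA _ _ hl).
    have -> : w * \sum_i c i * DA 0 (sA i) = \sum_i c i * (w *: DA) 0 (sA i).
      rewrite mulr_sumr; apply: eq_bigr => i _; rewrite mxE; ring.
    exact: (root_prod_perm (fun s => \sum_i c i * (w *: DA) 0 (s i))).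
  have hl : eigen_listing (B + t0 *: adjmx B) (fun i => (w *: DB) 0 i).
    rewrite -scK KBE scalemxAl scalemxAr -diag_mxZ'.
    exact: listing_diag.
  rewrite (hFB _ _ hl) eqv.
  have -> : w * \sum_i d i * DB 0 (sB i) = \sum_i d i * (w *: DB) 0 (sB i).
    rewrite mulr_sumr; apply: eq_bigr => i _; rewrite mxE; ring.
  exact: (root_prod_perm (fun s => \sum_i d i * (w *: DB) 0 (s i))).
have [lA hlA] := exists_listing A.
have [lB hlB] := exists_listing B.
have hlA' : eigen_listing (A + 0 *: adjmx A) lA by rewrite scale0r addr0.
have hlB' : eigen_listing (B + 0 *: adjmx B) lB by rewrite scale0r addr0.
exists u; split.
  by apply: (value_of_root hlA); rewrite -(hFA _ _ hlA').
by apply: (value_of_root hlB); rewrite -(hFB _ _ hlB').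
Qed.
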